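(* Let $H$ be a complex infinite-dimensional separable Hilbert space and let $(f_n)_{n=1}^\infty$ be a frame for $H$ with analysis operator $U$. The following are equivalent: (a) $\dim\operatorname{Im}(I-U^*U)<\infty$; (b) there exist a finite-dimensional subspace $L$ of $H$ and a sequence $(g_n)_{n=1}^\infty$ in $L$ such that $(f_n+g_n)_{n=1}^\infty$ is a Parseval frame for $H$; (c) there is a closed subspace $M$ of $H$ of finite codimension such that $x=\sum_{n=1}^\infty\langle x,f_n\rangle f_n$ for all $x\in M$.
   Context: A frame: there are $0<A\le B$ with $A\|x\|^2\le\sum_n|\langle x,f_n\rangle|^2\le B\|x\|^2$ for all $x\in H$. A Parseval frame: $\sum_n|\langle x,h_n\rangle|^2=\|x\|^2$ for all $x$. The analysis operator is $U:H\to\ell^2$, $Ux=(\langle x,f_n\rangle)_n$. *)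

(* Defs.v *)
From Stdlib Require Import Reals.
Open Scope R_scope.

Record C := mkC { re : R; im : R }.
Definition C0 : C := mkC 0 0.
Definition C1 : C := mkC 1 0.
Definition Cadd (a b : C) : C := mkC (re a + re b) (im a + im b).
Definition Cmul (a b : C) : C :=
  mkC (re a * re b - im a * im b) (re a * im b + im a * re b).
Definition Cconj (a : C) : C := mkC (re a) (- im a).
Definition Cmod2 (a : C) : R := re a * re a + im a * im a.

Definition Cinfinite_sum (a : nat -> C) (l : C) : Prop :=
  infinite_sum (fun n => re (a n)) (re l) /\ infinite_sum (fun n => im (a n)) (im l).

Record HilbertSpace := mkHilbert {
  V :> Type;
  vzero : V;
  vadd : V -> V -> V;
  vopp : V -> V;
  vscal : C -> V -> V;
  ip : V -> V -> C   (* linear in the first argument *)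
}.

Arguments vzero {h}.
Arguments vadd {h}.
Arguments vopp {h}.
Arguments vscal {h}.
Arguments ip {h}.

Definition vsub {H : HilbertSpace} (x y : H) : H := vadd x (vopp y).
Definition vnorm {H : HilbertSpace} (x : H) : R := sqrt (re (ip x x)).

Definition Cauchy_seq {H : HilbertSpace} (u : nat -> H) : Prop :=
  forall eps, eps > 0 -> exists N, forall n m, (n >= N)%nat -> (m >= N)%nat ->
    vnorm (vsub (u n) (u m)) < eps.

Definition seq_conv {H : HilbertSpace} (u : nat -> H) (l : H) : Prop :=
  forall eps, eps > 0 -> exists N, forall n, (n >= N)%nat -> vnorm (vsub (u n) l) < eps.

Definition is_hilbert (H : HilbertSpace) : Prop :=
  (forall x y z : H, vadd x (vadd y z) = vadd (vadd x y) z) /\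
  (forall x y : H, vadd x y = vadd y x) /\
  (forall x : H, vadd x vzero = x) /\
  (forall x : H, vadd x (vopp x) = vzero) /\
  (forall (a b : C) (x : H), vscal a (vscal b x) = vscal (Cmul a b) x) /\
  (forall x : H, vscal C1 x = x) /\
  (forall (a : C) (x y : H), vscal a (vadd x y) = vadd (vscal a x) (vscal a y)) /\
  (forall (a b : C) (x : H), vscal (Cadd a b) x = vadd (vscal a x) (vscal b x)) /\
  (forall x y z : H, ip (vadd x y) z = Cadd (ip x z) (ip y z)) /\
  (forall (a : C) (x y : H), ip (vscal a x) y = Cmul a (ip x y)) /\
  (forall x y : H, ip y x = Cconj (ip x y)) /\
  (forall x : H, 0 <= re (ip x x)) /\
  (forall x : H, ip x x = C0 -> x = vzero) /\
  (forall u : nat -> H, Cauchy_seq u -> exists l, seq_conv u l).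

Definition separable (H : HilbertSpace) : Prop :=
  exists d : nat -> H, forall (x : H) eps, eps > 0 -> exists n, vnorm (vsub x (d n)) < eps.

Fixpoint vsum {H : HilbertSpace} (k : nat) (F : nat -> H) : H :=
  match k with
  | O => vzero
  | S k' => vadd (vsum k' F) (F k')
  end.

Definition in_span {H : HilbertSpace} (k : nat) (e : nat -> H) (x : H) : Prop :=
  exists c : nat -> C, x = vsum k (fun i => vscal (c i) (e i)).

Definition infinite_dimensional (H : HilbertSpace) : Prop :=
  ~ exists (k : nat) (e : nat -> H), forall x : H, in_span k e x.

Definition is_subspace {H : HilbertSpace} (M : H -> Prop) : Prop :=
  M vzero /\ (forall x y, M x -> M y -> M (vadd x y)) /\
  (forall a x, M x -> M (vscal a x)).

Definition is_closed_set {H : HilbertSpace} (M : H -> Prop) : Prop :=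
  forall (u : nat -> H) l, (forall n, M (u n)) -> seq_conv u l -> M l.

Definition finite_dim_subspace {H : HilbertSpace} (L : H -> Prop) : Prop :=
  is_subspace L /\ exists (k : nat) (e : nat -> H), forall x, L x <-> in_span k e x.

Definition finite_codim {H : HilbertSpace} (M : H -> Prop) : Prop :=
  exists (k : nat) (e : nat -> H), forall x : H,
    exists m v, M m /\ in_span k e v /\ x = vadd m v.

Definition frame {H : HilbertSpace} (f : nat -> H) : Prop :=
  exists A B, 0 < A /\ A <= B /\
    forall x : H, exists s, infinite_sum (fun n => Cmod2 (ip x (f n))) s /\
      A * (vnorm x)^2 <= s /\ s <= B * (vnorm x)^2.

Definition parseval_frame {H : HilbertSpace} (f : nat -> H) : Prop :=
  forall x : H, infinite_sum (fun n => Cmod2 (ip x (f n))) ((vnorm x)^2).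

(* The analysis operator U x = (<x, f_n>)_n into l^2; its adjoint is
   determined by <U^* c, z> = <c, U z>_{l^2}.  Hence y = U^*U x means
   <y, z> = <U x, U z>_{l^2} = sum_n <x,f_n> conj(<z,f_n>) for all z. *)
Definition analysis_op {H : HilbertSpace} (f : nat -> H) (x : H) : nat -> C :=
  fun n => ip x (f n).

Definition l2_ip (a b : nat -> C) (l : C) : Prop :=
  Cinfinite_sum (fun n => Cmul (a n) (Cconj (b n))) l.

Definition UstarU {H : HilbertSpace} (f : nat -> H) (x y : H) : Prop :=
  forall z : H, l2_ip (analysis_op f x) (analysis_op f z) (ip y z).

Definition im_I_minus_UstarU {H : HilbertSpace} (f : nat -> H) (w : H) : Prop :=
  exists x y, UstarU f x y /\ w = vsub x y.

Definition finite_dim_set {H : HilbertSpace} (S : H -> Prop) : Prop :=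
  exists (k : nat) (e : nat -> H), forall x, S x -> in_span k e x.

Definition reconstructs {H : HilbertSpace} (f : nat -> H) (x : H) : Prop :=
  seq_conv (fun N => vsum (S N) (fun n => vscal (ip x (f n)) (f n))) x.

(* Main.v *)
Require Import Defs.
From Stdlib Require Import Reals.
From Stdlib Require Import Reals Lra Lia Psatz Ring Field.
From Stdlib Require Import IndefiniteDescription.
Import Defs.
Open Scope R_scope.

Definition Copp (a : C) : C := mkC (- re a) (- im a).
Definition Csub (a b : C) : C := Cadd a (Copp b).
Definition RC (r : R) : C := mkC r 0.
Definition Ci : C := mkC 0 1.

Lemma Ceq (a b : C) : re a = re b -> im a = im b -> a = b.
Proof. destruct a, b; simpl; intros; subst; reflexivity. Qed.

Lemma C_ring : ring_theory C0 C1 Cadd Cmul Csub Copp (@eq C).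
Proof.
  constructor; intros; apply Ceq; unfold Cadd, Cmul, Csub, Copp, C0, C1; simpl; ring.
Qed.
Add Ring Cring : C_ring.

Ltac Csimpl := apply Ceq; unfold Cadd, Cmul, Csub, Copp, C0, C1, Cconj, RC, Ci, Cmod2; simpl.

Lemma Cconj_add a b : Cconj (Cadd a b) = Cadd (Cconj a) (Cconj b).
Proof. Csimpl; ring. Qed.
Lemma Cconj_mul a b : Cconj (Cmul a b) = Cmul (Cconj a) (Cconj b).
Proof. Csimpl; ring. Qed.
Lemma Cconj_sub a b : Cconj (Csub a b) = Csub (Cconj a) (Cconj b).
Proof. Csimpl; ring. Qed.
Lemma Cconj_opp a : Cconj (Copp a) = Copp (Cconj a).
Proof. Csimpl; ring. Qed.
Lemma Cconj_conj a : Cconj (Cconj a) = a.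
Proof. Csimpl; ring. Qed.
Lemma Cconj_0 : Cconj C0 = C0.
Proof. Csimpl; ring. Qed.
Lemma Cconj_1 : Cconj C1 = C1.
Proof. Csimpl; ring. Qed.
Lemma Cconj_RC r : Cconj (RC r) = RC r.
Proof. Csimpl; ring. Qed.
Lemma re_mul_conj a : re (Cmul a (Cconj a)) = Cmod2 a.
Proof. unfold Cmul, Cconj, Cmod2; simpl; ring. Qed.
Lemma im_mul_conj a : im (Cmul a (Cconj a)) = 0.
Proof. unfold Cmul, Cconj, Cmod2; simpl; ring. Qed.
Lemma Cmod2_ge0 a : 0 <= Cmod2 a.
Proof. unfold Cmod2; nra. Qed.
Lemma Cmod2_0 a : Cmod2 a = 0 -> a = C0.
Proof. unfold Cmod2; intros; apply Ceq; simpl; nra. Qed.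
Lemma re_sq_le a : re a * re a <= Cmod2 a.
Proof. unfold Cmod2; nra. Qed.
Lemma im_sq_le a : im a * im a <= Cmod2 a.
Proof. unfold Cmod2; nra. Qed.

Fixpoint Csum (k : nat) (F : nat -> C) : C :=
  match k with O => C0 | S k' => Cadd (Csum k' F) (F k') end.

Lemma Csum_ext k F G : (forall i, (i < k)%nat -> F i = G i) -> Csum k F = Csum k G.
Proof. induction k; simpl; intros; auto. rewrite IHk, H; auto. Qed.
Lemma Csum_add k F G : Csum k (fun i => Cadd (F i) (G i)) = Cadd (Csum k F) (Csum k G).
Proof. induction k; simpl. ring. rewrite IHk; ring. Qed.
Lemma Csum_sub k F G : Csum k (fun i => Csub (F i) (G i)) = Csub (Csum k F) (Csum k G).
Proof. induction k; simpl. ring. rewrite IHk; ring. Qed.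
Lemma Csum_scal k c F : Csum k (fun i => Cmul c (F i)) = Cmul c (Csum k F).
Proof. induction k; simpl. ring. rewrite IHk; ring. Qed.
Lemma Csum_conj k F : Cconj (Csum k F) = Csum k (fun i => Cconj (F i)).
Proof. induction k; simpl. apply Cconj_0. rewrite Cconj_add, IHk; auto. Qed.
Lemma Csum_0 k : Csum k (fun _ => C0) = C0.
Proof. induction k; simpl; auto. rewrite IHk; ring. Qed.
Lemma sum_f_re n F : sum_f_R0 (fun i => re (F i)) n = re (Csum (S n) F).
Proof. induction n; simpl. unfold C0; simpl; ring. rewrite IHn; simpl; auto. Qed.
Lemma sum_f_im n F : sum_f_R0 (fun i => im (F i)) n = im (Csum (S n) F).
Proof. induction n; simpl. unfold C0; simpl; ring. rewrite IHn; simpl; auto. Qed.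

Lemma inf_ext (s t : nat -> R) l : (forall n, s n = t n) -> infinite_sum s l -> infinite_sum t l.
Proof.
  intros E h eps he. destruct (h eps he) as [N HN]. exists N; intros n hn.
  rewrite (sum_eq t s) by (intros; auto). auto.
Qed.
Lemma inf_unique s l1 l2 : infinite_sum s l1 -> infinite_sum s l2 -> l1 = l2.
Proof. intros. eapply UL_sequence; eauto. Qed.
Lemma cv_const r : Un_cv (fun _ => r) r.
Proof. intros e he; exists O; intros; unfold Rdist; rewrite Rminus_diag, Rabs_R0; lra. Qed.

Lemma Cinf_iff a l : Cinfinite_sum a l <->
  Un_cv (fun n => re (Csum (S n) a)) (re l) /\ Un_cv (fun n => im (Csum (S n) a)) (im l).
Proof.
  unfold Cinfinite_sum, infinite_sum.
  split; intros [h1 h2]; split; intros eps he;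
   [destruct (h1 eps he) as [N HN] | destruct (h2 eps he) as [N HN]
   |destruct (h1 eps he) as [N HN] | destruct (h2 eps he) as [N HN]];
   exists N; intros n hn; specialize (HN n hn);
   rewrite ?sum_f_re, ?sum_f_im in *; auto.
Qed.


Lemma Csum_ext' k F G : (forall i, F i = G i) -> Csum k F = Csum k G.
Proof. intros; apply Csum_ext; auto. Qed.

Lemma Cinf_ext a b l : (forall n, a n = b n) -> Cinfinite_sum a l -> Cinfinite_sum b l.
Proof.
  intros E h. apply Cinf_iff in h. apply Cinf_iff. destruct h as [h1 h2].
  split; intros eps he; [destruct (h1 eps he) as [N HN] | destruct (h2 eps he) as [N HN]];
  exists N; intros n hn; rewrite <- (Csum_ext' _ a b); auto.
Qed.

Lemma cv_ext (u v : nat -> R) l : (forall n, u n = v n) -> Un_cv u l -> Un_cv v l.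
Proof. intros E h eps he. destruct (h eps he) as [N HN]; exists N; intros; rewrite <- E; auto. Qed.

Lemma Cinf_add a b l1 l2 : Cinfinite_sum a l1 -> Cinfinite_sum b l2 ->
  Cinfinite_sum (fun n => Cadd (a n) (b n)) (Cadd l1 l2).
Proof.
  rewrite !Cinf_iff. intros [h1 h2] [k1 k2]. split.
  - eapply cv_ext; [| apply (CV_plus _ _ _ _ h1 k1)]. intro n; rewrite Csum_add; reflexivity.
  - eapply cv_ext; [| apply (CV_plus _ _ _ _ h2 k2)]. intro n; rewrite Csum_add; reflexivity.
Qed.

Lemma Cinf_scal c a l : Cinfinite_sum a l ->
  Cinfinite_sum (fun n => Cmul c (a n)) (Cmul c l).
Proof.
  rewrite !Cinf_iff. intros [h1 h2]. split.
  - eapply cv_ext; [| apply (CV_minus _ _ _ _ (CV_mult _ _ _ _ (cv_const (re c)) h1)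
                                           (CV_mult _ _ _ _ (cv_const (im c)) h2))].
    intro n; rewrite Csum_scal; reflexivity.
  - eapply cv_ext; [| apply (CV_plus _ _ _ _ (CV_mult _ _ _ _ (cv_const (re c)) h2)
                                           (CV_mult _ _ _ _ (cv_const (im c)) h1))].
    intro n; rewrite Csum_scal; reflexivity.
Qed.

Lemma Cinf_conj a l : Cinfinite_sum a l ->
  Cinfinite_sum (fun n => Cconj (a n)) (Cconj l).
Proof.
  rewrite !Cinf_iff. intros [h1 h2]. split.
  - eapply cv_ext; [| apply h1]. intro n. rewrite <- Csum_conj. reflexivity.
  - eapply cv_ext; [| apply (CV_opp _ _ h2)]. intro n. rewrite <- Csum_conj. reflexivity.
Qed.

Lemma Cinf_sub a b l1 l2 : Cinfinite_sum a l1 -> Cinfinite_sum b l2 ->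
  Cinfinite_sum (fun n => Csub (a n) (b n)) (Csub l1 l2).
Proof.
  intros h k. apply (Cinf_scal (Copp C1)) in k.
  eapply Cinf_ext; [| replace (Csub l1 l2) with (Cadd l1 (Cmul (Copp C1) l2)) by ring;
     apply (Cinf_add _ _ _ _ h k)].
  intro n; simpl; ring.
Qed.

Lemma Cinf_unique a l1 l2 : Cinfinite_sum a l1 -> Cinfinite_sum a l2 -> l1 = l2.
Proof.
  intros [h1 h2] [k1 k2]. apply Ceq; eapply inf_unique; eauto.
Qed.

Lemma Cinf_mod2 a l : Cinfinite_sum (fun n => Cmul (a n) (Cconj (a n))) l ->
  infinite_sum (fun n => Cmod2 (a n)) (re l).
Proof. intros [h1 _]. eapply inf_ext; [| apply h1]. intro n; apply re_mul_conj. Qed.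

Fixpoint rsum (k : nat) (g : nat -> R) : R :=
  match k with O => 0 | S k' => rsum k' g + g k' end.
Lemma rsum_sf n g : rsum (S n) g = sum_f_R0 g n.
Proof. induction n; simpl in *; auto. lra. rewrite <- IHn; auto. Qed.
Lemma rsum_le k g h : (forall i, g i <= h i) -> rsum k g <= rsum k h.
Proof. induction k; simpl; intros; [lra|]. specialize (IHk H). specialize (H k). lra. Qed.
Lemma rsum_ge0 k g : (forall i, 0 <= g i) -> 0 <= rsum k g.
Proof. induction k; simpl; intros; [lra|]. specialize (IHk H). specialize (H k). lra. Qed.
Lemma rsum_add k g h : rsum k (fun i => g i + h i) = rsum k g + rsum k h.
Proof. induction k; simpl; [lra|]. rewrite IHk; ring. Qed.
Lemma rsum_scal k c g : rsum k (fun i => c * g i) = c * rsum k g.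
Proof. induction k; simpl; [lra|]. rewrite IHk; ring. Qed.
Lemma rsum_shift N K g : rsum (N+K) g = rsum N g + rsum K (fun j => g (N+j)%nat).
Proof. induction K; simpl. rewrite Nat.add_0_r; ring. rewrite Nat.add_succ_r; simpl. rewrite IHK; ring. Qed.
Lemma re_Csum k F : re (Csum k F) = rsum k (fun i => re (F i)).
Proof. induction k; simpl; auto. rewrite IHk; auto. Qed.
Lemma Csum_shift N K F : Csum (N+K) F = Cadd (Csum N F) (Csum K (fun j => F (N+j)%nat)).
Proof. induction K; simpl. rewrite Nat.add_0_r; ring. rewrite Nat.add_succ_r; simpl. rewrite IHK; ring. Qed.
Lemma rsum_le_lim g s : (forall i, 0 <= g i) -> infinite_sum g s -> forall n, rsum n g <= s.
Proof.
  intros hg hs.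
  assert (G : forall n, sum_f_R0 g n <= s).
  { apply growing_ineq; auto. intro n; simpl. specialize (hg (S n)); lra. }
  intros [|n]. simpl. specialize (G O); specialize (hg O); simpl in G; lra.
  rewrite rsum_sf; auto.
Qed.
Lemma abs_lt_sq r e : 0 < e -> r * r < e * e -> Rabs r < e.
Proof. intros. unfold Rabs; destruct Rcase_abs; nra. Qed.
Lemma re_conj_bound t a b : 0 < t ->
  2 * t * re (Cmul a (Cconj b)) <= t * t * Cmod2 a + Cmod2 b.
Proof. intros. unfold Cmod2, Cmul, Cconj; simpl.
  generalize (pow2_ge_0 (t * re a - re b)) (pow2_ge_0 (t * im a - im b)); nra. Qed.

Lemma inf_polar s1 s2 l1 l2 : infinite_sum s1 l1 -> infinite_sum s2 l2 ->
  infinite_sum (fun n => (s1 n - s2 n) / 4) ((l1 - l2) / 4).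
Proof.
  intros h1 h2. unfold infinite_sum in *. fold (Un_cv (sum_f_R0 s1) l1) in h1.
  fold (Un_cv (sum_f_R0 s2) l2) in h2. fold (Un_cv (sum_f_R0 (fun n => (s1 n - s2 n) / 4)) ((l1 - l2) / 4)).
  eapply cv_ext; [| apply (CV_mult _ _ _ _ (CV_minus _ _ _ _ h1 h2) (cv_const (/ 4)))].
  intro n; simpl. induction n; simpl. unfold Rdiv; ring. rewrite <- IHn. unfold Rdiv; ring.
Qed.
Section Hilb.
Variable H : HilbertSpace.
Hypothesis HH : is_hilbert H.

Lemma vaddA (x y z : H) : vadd x (vadd y z) = vadd (vadd x y) z.
Proof. destruct HH as (h&_); apply h. Qed.
Lemma vaddC (x y : H) : vadd x y = vadd y x.
Proof. destruct HH as (_&h&_); apply h. Qed.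
Lemma vadd0 (x : H) : vadd x vzero = x.
Proof. destruct HH as (_&_&h&_); apply h. Qed.
Lemma vaddN (x : H) : vadd x (vopp x) = vzero.
Proof. destruct HH as (_&_&_&h&_); apply h. Qed.
Lemma ipDl (x y z : H) : ip (vadd x y) z = Cadd (ip x z) (ip y z).
Proof. destruct HH as (_&_&_&_&_&_&_&_&h&_); apply h. Qed.
Lemma ipZl a (x y : H) : ip (vscal a x) y = Cmul a (ip x y).
Proof. destruct HH as (_&_&_&_&_&_&_&_&_&h&_); apply h. Qed.
Lemma ip_sym (x y : H) : ip y x = Cconj (ip x y).
Proof. destruct HH as (_&_&_&_&_&_&_&_&_&_&h&_); apply h. Qed.
Lemma ip_pos (x : H) : 0 <= re (ip x x).
Proof. destruct HH as (_&_&_&_&_&_&_&_&_&_&_&h&_); apply h. Qed.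
Lemma ip_def (x : H) : ip x x = C0 -> x = vzero.
Proof. destruct HH as (_&_&_&_&_&_&_&_&_&_&_&_&h&_); apply h. Qed.
Lemma complete (u : nat -> H) : Cauchy_seq u -> exists l, seq_conv u l.
Proof. destruct HH as (_&_&_&_&_&_&_&_&_&_&_&_&_&h); apply h. Qed.

Lemma ip0l (z : H) : ip vzero z = C0.
Proof.
  assert (E := ipDl vzero vzero z). rewrite vadd0 in E.
  apply Ceq; [assert (E' := f_equal re E) | assert (E' := f_equal im E)]; simpl in *; lra.
Qed.
Lemma ipNl (x z : H) : ip (vopp x) z = Copp (ip x z).
Proof.
  assert (E := ipDl x (vopp x) z). rewrite vaddN, ip0l in E.
  apply Ceq; [assert (E' := f_equal re E) | assert (E' := f_equal im E)]; simpl in *; lra.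
Qed.
Lemma ipBl (x y z : H) : ip (vsub x y) z = Csub (ip x z) (ip y z).
Proof. unfold vsub; rewrite ipDl, ipNl; reflexivity. Qed.
Lemma ipDr (x y z : H) : ip z (vadd x y) = Cadd (ip z x) (ip z y).
Proof. rewrite ip_sym, ipDl, Cconj_add, <- !ip_sym; auto. Qed.
Lemma ipZr a (x y : H) : ip y (vscal a x) = Cmul (Cconj a) (ip y x).
Proof. rewrite ip_sym, ipZl, Cconj_mul, <- ip_sym; auto. Qed.
Lemma ipNr (x z : H) : ip z (vopp x) = Copp (ip z x).
Proof. rewrite ip_sym, ipNl, Cconj_opp, <- ip_sym; auto. Qed.
Lemma ipBr (x y z : H) : ip z (vsub x y) = Csub (ip z x) (ip z y).
Proof. unfold vsub; rewrite ipDr, ipNr; reflexivity. Qed.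
Lemma ip0r (z : H) : ip z vzero = C0.
Proof. rewrite ip_sym, ip0l; apply Cconj_0. Qed.

Lemma ip_vsum_l k (F : nat -> H) z : ip (vsum k F) z = Csum k (fun i => ip (F i) z).
Proof. induction k; simpl. apply ip0l. rewrite ipDl, IHk; auto. Qed.
Lemma ip_vsum_r k (F : nat -> H) z : ip z (vsum k F) = Csum k (fun i => ip z (F i)).
Proof. induction k; simpl. apply ip0r. rewrite ipDr, IHk; auto. Qed.

Lemma vsub_eq0 (a b : H) : vsub a b = vzero -> a = b.
Proof.
  unfold vsub; intros E.
  rewrite <- (vadd0 a), <- (vaddN b), (vaddC b), vaddA, E, vaddC, vadd0; auto.
Qed.

Lemma v_ext (a b : H) : (forall z, ip a z = ip b z) -> a = b.
Proof.
  intros E. apply vsub_eq0, ip_def. rewrite ipBl, E. ring.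
Qed.

Lemma ip_vsum_scal_l k c (u : nat -> H) z :
  ip (vsum k (fun i => vscal (c i) (u i))) z = Csum k (fun i => Cmul (c i) (ip (u i) z)).
Proof. rewrite ip_vsum_l. apply Csum_ext'. intro; apply ipZl. Qed.
Lemma ip_vsum_scal_r k c (u : nat -> H) z :
  ip z (vsum k (fun i => vscal (c i) (u i))) = Csum k (fun i => Cmul (Cconj (c i)) (ip z (u i))).
Proof. rewrite ip_vsum_r. apply Csum_ext'. intro; apply ipZr. Qed.

Ltac ipexp := repeat (rewrite ?ip_vsum_scal_l, ?ip_vsum_scal_r, ?ipDl, ?ipZl, ?ipBl, ?ipNl, ?ip0l,
   ?ipDr, ?ipZr, ?ipBr, ?ipNr, ?ip0r); rewrite ?ip_vsum_l, ?ip_vsum_r.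
Ltac vext := apply v_ext; intro; ipexp; ring.

Definition nsq (x : H) : R := re (ip x x).

Lemma im_ipxx (x : H) : im (ip x x) = 0.
Proof. assert (E := f_equal im (ip_sym x x)). simpl in E. lra. Qed.
Lemma nsq_ge0 x : 0 <= nsq x.
Proof. apply ip_pos. Qed.
Lemma nsq_0 x : nsq x = 0 -> x = vzero.
Proof. intros E; apply ip_def; apply Ceq; simpl; [apply E | apply im_ipxx]. Qed.
Lemma ipxx_RC x : ip x x = RC (nsq x).
Proof. apply Ceq; simpl; auto. apply im_ipxx. Qed.
Lemma vnorm_sq x : (vnorm x)^2 = nsq x.
Proof. unfold vnorm; apply pow2_sqrt, ip_pos. Qed.
Lemma vnorm_lt x e : 0 < e -> (vnorm x < e <-> nsq x < e*e).
Proof.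
  intros He. unfold vnorm. fold (nsq x). assert (h := nsq_ge0 x).
  split; intro E.
  - assert (0 <= sqrt (nsq x)) by apply sqrt_pos.
    rewrite <- (sqrt_sqrt (nsq x)) by auto. nra.
  - rewrite <- (sqrt_square e) by lra. apply sqrt_lt_1_alt; lra.
Qed.

Lemma cauchy_schwarz (x y : H) : Cmod2 (ip x y) <= nsq x * nsq y.
Proof.
  destruct (Req_dec (nsq y) 0) as [E|E].
  - apply nsq_0 in E; subst. rewrite ip0r. unfold Cmod2; simpl.
    unfold nsq. rewrite ip0r. simpl. lra.
  - set (t := / nsq y). set (c := ip x y).
    set (v := vsub x (vscal (Cmul (RC t) c) y)).
    assert (h := nsq_ge0 v).
    assert (Ev : ip v v = Csub (Csub (Cadd (ip x x) (Cmul (Cmul (Cmul (RC t) c) (Cconj (Cmul (RC t) c))) (ip y y)))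
                  (Cmul (Cconj (Cmul (RC t) c)) c)) (Cmul (Cmul (RC t) c) (Cconj c))).
    { unfold v. ipexp. rewrite (ip_sym x y). fold c. ring. }
    unfold nsq in h. rewrite Ev in h. rewrite (ipxx_RC y), (ipxx_RC x) in h.
    assert (Hy := nsq_ge0 y). assert (ty : t * nsq y = 1) by (unfold t; field; auto).
    unfold Cmod2. revert h. unfold Csub, Cadd, Cmul, Copp, Cconj, RC; simpl.
    intro h. assert (0 < nsq y) by lra.
    assert (Ht : 0 < t) by (unfold t; apply Rinv_0_lt_compat; auto).
    set (a := re c) in *. set (b := im c) in *.
    assert (h' : 0 <= nsq x + t*(a*a+b*b)*(t*nsq y) - 2*(t*(a*a+b*b)))
      by (eapply Rle_trans; [exact h| right; ring]).
    rewrite ty in h'.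
    assert (h3 : t * (a*a+b*b) * nsq y <= nsq x * nsq y).
    { apply Rmult_le_compat_r; lra. }
    replace (a*a+b*b) with ((a*a+b*b) * (t * nsq y)) by (rewrite ty; ring). lra.
Qed.

Lemma vsum_ext k (F G : nat -> H) : (forall i, (i < k)%nat -> F i = G i) -> vsum k F = vsum k G.
Proof. induction k; simpl; intros; auto. rewrite IHk, H0; auto. Qed.

Lemma Csum_delta m j F : (j < m)%nat -> (forall i, (i < m)%nat -> i <> j -> F i = C0) -> Csum m F = F j.
Proof.
  induction m; intros hj hF; [lia|]. simpl.
  destruct (Nat.eq_dec j m) as [->|ne].
  - rewrite (Csum_ext m F (fun _ => C0)), Csum_0 by (intros; apply hF; lia). ring.
  - rewrite IHm by (auto; lia). rewrite (hF m) by lia. ring.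
Qed.
Lemma Csum_zero m F : (forall i, (i < m)%nat -> F i = C0) -> Csum m F = C0.
Proof. intros. rewrite (Csum_ext m F (fun _ => C0)) by auto. apply Csum_0. Qed.

Lemma in_span_ext m u u' (x : H) : (forall i, (i < m)%nat -> u i = u' i) -> in_span m u x -> in_span m u' x.
Proof. intros E [c ->]. exists c. apply vsum_ext. intros; rewrite E; auto. Qed.
Lemma in_span_S m u (x : H) : in_span m u x -> in_span (S m) u x.
Proof.
  intros [c ->]. exists (fun i => if Nat.ltb i m then c i else C0). simpl.
  apply v_ext; intro z. ipexp. rewrite Nat.ltb_irrefl.
  rewrite (Csum_ext m (fun i => Cmul (if Nat.ltb i m then c i else C0) (ip (u i) z)) (fun i => Cmul (c i) (ip (u i) z))). ring.
  intros i hi. rewrite (proj2 (Nat.ltb_lt i m) hi). auto.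
Qed.
Lemma in_span_le m m' u (x : H) : (m <= m')%nat -> in_span m u x -> in_span m' u x.
Proof. induction 1; auto. intro; apply in_span_S; auto. Qed.
Lemma in_span_add m u (x y : H) : in_span m u x -> in_span m u y -> in_span m u (vadd x y).
Proof.
  intros [c ->] [d ->]. exists (fun i => Cadd (c i) (d i)). apply v_ext; intro z. ipexp.
  rewrite <- Csum_add. apply Csum_ext'. intro; ring.
Qed.
Lemma in_span_scal m u a (x : H) : in_span m u x -> in_span m u (vscal a x).
Proof.
  intros [c ->]. exists (fun i => Cmul a (c i)). apply v_ext; intro z. ipexp.
  rewrite <- Csum_scal. apply Csum_ext'. intro; ring.
Qed.
Lemma in_span_sub m u (x y : H) : in_span m u x -> in_span m u y -> in_span m u (vsub x y).
Proof.
  intros hx hy. replace (vsub x y) with (vadd x (vscal (Copp C1) y)) by vext.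
  apply in_span_add; auto. apply in_span_scal; auto.
Qed.
Lemma in_span_zero m u : in_span m u (vzero : H).
Proof. exists (fun _ => C0). apply v_ext; intro z. ipexp. rewrite Csum_zero; auto. intros; ring. Qed.
Lemma in_span_elem m u i : (i < m)%nat -> in_span m u (u i : H).
Proof.
  intro hi. exists (fun j => if Nat.eqb j i then C1 else C0). apply v_ext; intro z. ipexp.
  rewrite (Csum_delta m i) by (auto; intros j hj ne; rewrite (proj2 (Nat.eqb_neq j i) ne); ring).
  rewrite Nat.eqb_refl. ring.
Qed.
Lemma in_span_vsum m u k (d : nat -> C) (e : nat -> H) :
  (forall j, (j < k)%nat -> in_span m u (e j)) -> in_span m u (vsum k (fun j => vscal (d j) (e j))).
Proof.
  induction k; simpl; intros h. apply in_span_zero.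
  apply in_span_add. apply IHk; auto. apply in_span_scal; auto.
Qed.

Definition ext (u : nat -> H) m (w : H) : nat -> H := fun i => if Nat.eqb i m then w else u i.

Lemma ext_lt u m w i : (i < m)%nat -> ext u m w i = u i.
Proof. intro; unfold ext. rewrite (proj2 (Nat.eqb_neq i m)); auto; lia. Qed.
Lemma ext_m u m w : ext u m w m = w.
Proof. unfold ext; rewrite Nat.eqb_refl; auto. Qed.

Section Form.
Variable q : H -> H -> C.
Hypothesis qDl : forall x y z, q (vadd x y) z = Cadd (q x z) (q y z).
Hypothesis qZl : forall a x z, q (vscal a x) z = Cmul a (q x z).
Hypothesis qsym : forall x y, q y x = Cconj (q x y).
#[local] Set Default Proof Using "All".

Lemma q0l z : q vzero z = C0.
Proof.
  assert (E := qDl vzero vzero z). rewrite vadd0 in E.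
  apply Ceq; [assert (E' := f_equal re E) | assert (E' := f_equal im E)]; simpl in *; lra.
Qed.
Lemma q0r z : q z vzero = C0.
Proof. rewrite qsym, q0l. apply Cconj_0. Qed.
Lemma qDr x y z : q z (vadd x y) = Cadd (q z x) (q z y).
Proof. rewrite qsym, qDl, Cconj_add, <- !qsym; auto. Qed.
Lemma qZr a x z : q z (vscal a x) = Cmul (Cconj a) (q z x).
Proof. rewrite qsym, qZl, Cconj_mul, <- qsym; auto. Qed.
Lemma qBl x y z : q (vsub x y) z = Csub (q x z) (q y z).
Proof.
  replace (vsub x y) with (vadd x (vscal (Copp C1) y)) by vext.
  rewrite qDl, qZl. ring.
Qed.
Lemma qBr x y z : q z (vsub x y) = Csub (q z x) (q z y).
Proof. rewrite qsym, qBl, Cconj_sub, <- !qsym; auto. Qed.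
Lemma qvsum_l k F z : q (vsum k F) z = Csum k (fun i => q (F i) z).
Proof. induction k; simpl. apply q0l. rewrite qDl, IHk; auto. Qed.
Lemma qvsum_r k F z : q z (vsum k F) = Csum k (fun i => q z (F i)).
Proof. induction k; simpl. apply q0r. rewrite qDr, IHk; auto. Qed.
Lemma im_qxx x : im (q x x) = 0.
Proof. assert (E := f_equal im (qsym x x)). simpl in E. lra. Qed.

Definition orthonormal m (u : nat -> H) : Prop :=
  forall i j, (i < m)%nat -> (j < m)%nat -> q (u i) (u j) = if Nat.eqb i j then C1 else C0.

Lemma ortho_coef m u c j : orthonormal m u -> (j < m)%nat ->
  q (vsum m (fun i => vscal (c i) (u i))) (u j) = c j.
Proof.
  intros ho hj. rewrite qvsum_l.
  rewrite (Csum_delta m j) by (auto; intros i hi ne; rewrite qZl, ho by auto;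
      rewrite (proj2 (Nat.eqb_neq i j) ne); ring).
  rewrite qZl, ho, Nat.eqb_refl by auto. ring.
Qed.

Definition proj m u (x : H) := vsum m (fun i => vscal (q x (u i)) (u i)).

Lemma proj_orth m u x j : orthonormal m u -> (j < m)%nat -> q (vsub x (proj m u x)) (u j) = C0.
Proof. intros. unfold proj. rewrite qBl, ortho_coef; auto. ring. Qed.

Lemma orth_span m u w y : (forall j, (j < m)%nat -> q w (u j) = C0) -> in_span m u y -> q w y = C0.
Proof.
  intros h [c ->]. rewrite qvsum_r. apply Csum_zero. intros i hi. rewrite qZr, h; auto. ring.
Qed.

Lemma normalize v : 0 < re (q v v) ->
  q (vscal (RC (/ sqrt (re (q v v)))) v) (vscal (RC (/ sqrt (re (q v v)))) v) = C1.
Proof.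
  intro hr. rewrite qZl, qZr. assert (hi := im_qxx v).
  set (r := re (q v v)) in *. assert (hs := sqrt_lt_R0 _ hr). assert (hss := sqrt_sqrt r (Rlt_le _ _ hr)).
  apply Ceq; unfold Cmul, Cconj, RC, C1; simpl; rewrite hi; fold r.
  - field_simplify; [| lra]. rewrite pow2_sqrt by lra. field; lra.
  - ring.
Qed.

Lemma ortho_ext m u w : orthonormal m u -> (forall j, (j < m)%nat -> q w (u j) = C0) -> q w w = C1 ->
  orthonormal (S m) (ext u m w).
Proof.
  intros ho hw hww i j hi hj.
  destruct (Nat.eq_dec i m) as [->|ni]; destruct (Nat.eq_dec j m) as [->|nj].
  - rewrite ext_m, Nat.eqb_refl; auto.
  - rewrite ext_m, ext_lt by lia. rewrite (proj2 (Nat.eqb_neq m j)) by lia. apply hw; lia.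
  - rewrite ext_m, ext_lt by lia. rewrite (proj2 (Nat.eqb_neq i m)) by lia.
    rewrite qsym, hw by lia. apply Cconj_0.
  - rewrite !ext_lt by lia. apply ho; lia.
Qed.

Lemma normsum m b c : orthonormal m b ->
  q (vsum m (fun i => vscal (c i) (b i))) (vsum m (fun i => vscal (c i) (b i)))
  = Csum m (fun i => Cmul (c i) (Cconj (c i))).
Proof.
  intro hb. rewrite qvsum_r. apply Csum_ext. intros i hi. rewrite qZr, ortho_coef; auto. ring.
Qed.

End Form.

Notation IP := (@ip H).
Lemma proj_span q m u x : in_span m u (proj q m u x).
Proof. exists (fun i => q x (u i)). reflexivity. Qed.

Lemma CRinv a : a <> 0 -> Cmul (RC a) (RC (/ a)) = C1.
Proof. intro. Csimpl; field; auto. Qed.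

Lemma GS1 k (e : nat -> H) : exists m u, orthonormal IP m u /\ forall i, (i < k)%nat -> in_span m u (e i).
Proof.
  induction k.
  - exists O, (fun _ => vzero). split. intros i j hi; lia. intros; lia.
  - destruct IHk as (m & u & hu & hs).
    set (v := vsub (e k) (proj IP m u (e k))).
    destruct (Classical_Prop.classic (v = vzero)) as [v0|vn].
    + exists m, u. split; auto. intros i hi. destruct (Nat.eq_dec i k) as [->|ne].
      * apply vsub_eq0 in v0. rewrite v0. apply proj_span.
      * apply hs; lia.
    + assert (hr : 0 < nsq v).
      { destruct (nsq_ge0 v) as [h|h]; auto. exfalso; apply vn, nsq_0; auto. }
      set (w := vscal (RC (/ sqrt (re (ip v v)))) v).
      exists (S m), (ext u m w). split.
      * apply (ortho_ext IP ipDl ipZl ip_sym); auto.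
        -- intros j hj. unfold w. rewrite ipZl. unfold v. rewrite (proj_orth IP ipDl ipZl ip_sym); auto. ring.
        -- apply (normalize IP ipDl ipZl ip_sym); auto.
      * intros i hi. destruct (Nat.eq_dec i k) as [->|ne].
        -- assert (E : e k = vadd (vscal (RC (sqrt (nsq v))) w) (proj IP m u (e k))).
           { apply v_ext; intro z. unfold w. ipexp.
             replace (Cmul (RC (sqrt (nsq v))) (Cmul (RC (/ sqrt (re (ip v v)))) (ip v z)))
               with (Cmul (Cmul (RC (sqrt (nsq v))) (RC (/ sqrt (nsq v)))) (ip v z)) by (unfold nsq; ring).
             rewrite CRinv by (apply Rgt_not_eq, sqrt_lt_R0; auto).
             unfold v. ipexp. ring. }
           rewrite E. apply in_span_add.
           ++ apply in_span_scal. assert (Hw : in_span (S m) (ext u m w) (ext u m w m)) by (apply in_span_elem; lia).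
              rewrite ext_m in Hw. exact Hw.
           ++ apply in_span_S. eapply in_span_ext; [| apply proj_span].
              intros; rewrite ext_lt; auto.
        -- apply in_span_S. eapply in_span_ext; [| apply hs; lia]. intros; rewrite ext_lt; auto.
Qed.

Lemma span_orth_next m u j y : orthonormal IP m u -> (j < m)%nat -> in_span j u y -> ip y (u j) = C0.
Proof.
  intros hu hj [c ->]. ipexp. apply Csum_zero. intros i hi. rewrite hu by lia.
  rewrite (proj2 (Nat.eqb_neq i j)) by lia. ring.
Qed.

Lemma GS2 q (qDl : forall x y z, q (vadd x y) z = Cadd (q x z) (q y z))
  (qZl : forall a x z, q (vscal a x) z = Cmul a (q x z))
  (qsym : forall x y, q y x = Cconj (q x y))
  (qpos : forall v, v <> vzero -> 0 < re (q v v)) m u :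
  orthonormal IP m u -> exists b, orthonormal q m b /\ forall i, (i < m)%nat -> in_span m u (b i).
Proof.
  intros hu.
  assert (aux : forall j, (j <= m)%nat -> exists b, orthonormal q j b /\ forall i, (i < j)%nat -> in_span j u (b i)).
  { induction j; intros hj.
    - exists (fun _ => vzero). split. intros i k hi; lia. intros; lia.
    - destruct (IHj ltac:(lia)) as (b & hb & hs).
      set (v := vsub (u j) (proj q j b (u j))).
      assert (hv1 : ip v (u j) = C1).
      { unfold v. rewrite ipBl, hu, Nat.eqb_refl by lia.
        assert (h0 : ip (proj q j b (u j)) (u j) = C0).
        { apply (span_orth_next m u j); [auto|lia|]. unfold proj; apply in_span_vsum; auto. }
        rewrite h0; ring. }
      assert (vn : v <> vzero).
      { intro h. rewrite h, ip0l in hv1. assert (E := f_equal re hv1). simpl in E. lra. }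
      assert (hr := qpos v vn).
      set (w := vscal (RC (/ sqrt (re (q v v)))) v).
      exists (ext b j w). split.
      + apply (ortho_ext q qDl qZl qsym); auto.
        * intros i hi. unfold w. rewrite qZl. unfold v. rewrite (proj_orth q qDl qZl qsym); auto. ring.
        * apply (normalize q qDl qZl qsym); auto.
      + intros i hi. destruct (Nat.eq_dec i j) as [->|ne].
        * rewrite ext_m. unfold w. apply in_span_scal. unfold v. apply in_span_sub.
          -- apply in_span_elem; lia.
          -- apply in_span_S. unfold proj. apply in_span_vsum. auto.
        * rewrite ext_lt by lia. apply in_span_S, hs; lia. }
  apply aux; lia.
Qed.

Lemma polar (h : nat -> H) : parseval_frame h -> forall x z,
  Cinfinite_sum (fun n => Cmul (ip x (h n)) (Cconj (ip z (h n)))) (ip x z).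
Proof.
  intros hp x z. split.
  - assert (V : re (ip x z) = ((vnorm (vadd x z))^2 - (vnorm (vsub x z))^2) / 4).
    { rewrite !vnorm_sq. unfold nsq. ipexp. rewrite (ip_sym x z).
      unfold Cadd, Csub, Copp, Cconj; simpl. field. }
    rewrite V. eapply inf_ext; [| apply (inf_polar _ _ _ _ (hp (vadd x z)) (hp (vsub x z)))].
    intro n. cbv beta. rewrite ipDl, ipBl. unfold Cmod2, Cadd, Csub, Copp, Cmul, Cconj; simpl. field.
  - assert (V : im (ip x z) = ((vnorm (vadd x (vscal Ci z)))^2 - (vnorm (vsub x (vscal Ci z)))^2) / 4).
    { rewrite !vnorm_sq. unfold nsq. ipexp. rewrite (ip_sym x z).
      unfold Cadd, Csub, Copp, Cconj, Cmul, Ci; simpl. field. }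
    rewrite V. eapply inf_ext; [| apply (inf_polar _ _ _ _ (hp (vadd x (vscal Ci z))) (hp (vsub x (vscal Ci z))))].
    intro n. cbv beta. rewrite ipDl, ipBl, ipZl. unfold Cmod2, Cadd, Csub, Copp, Cmul, Cconj, Ci; simpl. field.
Qed.

Lemma span_trans k e m u (x : H) : (forall i, (i < k)%nat -> in_span m u (e i)) -> in_span k e x -> in_span m u x.
Proof. intros h [c ->]. apply in_span_vsum; auto. Qed.

Definition concat m1 (e1 e2 : nat -> H) : nat -> H :=
  fun i => if Nat.ltb i m1 then e1 i else e2 (i - m1)%nat.

Lemma in_span_concat m1 m2 e1 e2 (a b : H) : in_span m1 e1 a -> in_span m2 e2 b ->
  in_span (m1 + m2) (concat m1 e1 e2) (vadd a b).
Proof.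
  intros [c ->] [d ->].
  exists (fun i => if Nat.ltb i m1 then c i else d (i - m1)%nat).
  apply v_ext; intro z. ipexp. rewrite Csum_shift. f_equal.
  - apply Csum_ext. intros i hi. unfold concat. rewrite (proj2 (Nat.ltb_lt i m1) hi). auto.
  - apply Csum_ext. intros i hi. unfold concat.
    rewrite (proj2 (Nat.ltb_ge (m1 + i) m1)) by lia. replace (m1 + i - m1)%nat with i by lia. auto.
Qed.

Lemma vsum_shift N K (F : nat -> H) :
  vsub (vsum (N+K) F) (vsum N F) = vsum K (fun j => F (N+j)%nat).
Proof. apply v_ext; intro z. ipexp. rewrite Csum_shift. ring. Qed.

Lemma nsq_sym (a b : H) : nsq (vsub a b) = nsq (vsub b a).
Proof. unfold nsq. f_equal. ipexp. ring. Qed.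

Lemma ip_cont (u : nat -> H) l z : seq_conv u l ->
  Un_cv (fun n => re (ip (u n) z)) (re (ip l z)) /\ Un_cv (fun n => im (ip (u n) z)) (im (ip l z)).
Proof.
  intros hu.
  assert (main : forall eps, eps > 0 -> exists N, forall n, (n >= N)%nat ->
            Cmod2 (ip (vsub (u n) l) z) < eps * eps).
  { intros eps he. set (K := nsq z + 1). assert (hK : 0 < K) by (unfold K; generalize (nsq_ge0 z); lra).
    assert (sK := sqrt_lt_R0 _ hK).
    destruct (hu (eps / sqrt K)) as [N HN]. { apply Rdiv_lt_0_compat; lra. }
    exists N; intros n hn. specialize (HN n hn).
    apply vnorm_lt in HN; [| apply Rdiv_lt_0_compat; lra].
    eapply Rle_lt_trans; [apply cauchy_schwarz|].
    assert (e2 : eps / sqrt K * (eps / sqrt K) = eps*eps / K).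
    { assert (hs : sqrt K * sqrt K = K) by (apply sqrt_sqrt; lra).
      set (q := sqrt K) in *. rewrite <- hs. field. lra. }
    rewrite e2 in HN. generalize (nsq_ge0 z) (nsq_ge0 (vsub (u n) l)); intros.
    apply Rle_lt_trans with (eps * eps / K * nsq z).
    - apply Rmult_le_compat_r; lra.
    - unfold K. unfold K in HN. apply Rmult_lt_reg_r with (nsq z + 1); [lra|].
      field_simplify; [|lra]. nra. }
  split; intros eps he; destruct (main eps he) as [N HN]; exists N; intros n hn;
  specialize (HN n hn); unfold Rdist; apply abs_lt_sq; auto; rewrite ipBl in HN;
  [ eapply Rle_lt_trans; [| apply HN]; generalize (re_sq_le (Csub (ip (u n) z) (ip l z))); simpl; lra
  | eapply Rle_lt_trans; [| apply HN]; generalize (im_sq_le (Csub (ip (u n) z) (ip l z))); simpl; lra].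
Qed.

Section Frame.
Variable f : nat -> H.
Hypothesis Hf : frame f.

Definition fA := proj1_sig (constructive_indefinite_description _ Hf).
Definition fb := proj1_sig (constructive_indefinite_description _ (proj2_sig (constructive_indefinite_description _ Hf))).
Lemma fb_spec : exists A, 0 < A /\ A <= fb /\ forall x : H, exists s,
   infinite_sum (fun n => Cmod2 (ip x (f n))) s /\ A * nsq x <= s /\ s <= fb * nsq x.
Proof.
  unfold fb. destruct (constructive_indefinite_description _ Hf) as [A hA']; simpl.
  destruct constructive_indefinite_description as [B hB]; simpl.
  destruct hB as (hA & hAB & h). exists A. repeat split; auto.
  intro x. destruct (h x) as (s & h1 & h2 & h3).
  assert (E: vnorm x * (vnorm x * 1) = nsq x) by (rewrite <- vnorm_sq; simpl; ring). rewrite E in *. eauto.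
Qed.
Lemma fb_pos : 0 < fb.
Proof. destruct fb_spec as (A & ? & ? & _). lra. Qed.
Lemma fb_upper x : exists s, infinite_sum (fun n => Cmod2 (ip x (f n))) s /\ s <= fb * nsq x.
Proof. destruct fb_spec as (A & ? & ? & h). destruct (h x) as (s&?&?&?). eauto. Qed.

Definition Pa (x : H) N := vsum N (fun n => vscal (ip x (f n)) (f n)).

Lemma seg_bound x N K :
  nsq (vsum K (fun j => vscal (ip x (f (N+j)%nat)) (f (N+j)%nat)))
  <= fb * rsum K (fun j => Cmod2 (ip x (f (N+j)%nat))).
Proof.
  set (W := vsum K _).
  assert (E : nsq W = rsum K (fun j => re (Cmul (ip x (f (N+j)%nat)) (Cconj (ip W (f (N+j)%nat)))))).
  { unfold nsq. rewrite <- re_Csum. f_equal. unfold W at 1. rewrite ip_vsum_l.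
    apply Csum_ext'. intro i. rewrite ipZl, <- ip_sym. reflexivity. }
  assert (B1 : rsum K (fun j => Cmod2 (ip W (f (N+j)%nat))) <= fb * nsq W).
  { destruct (fb_upper W) as (s & hs & hb).
    assert (h1 := rsum_le_lim _ _ (fun i => Cmod2_ge0 _) hs (N+K)).
    rewrite rsum_shift in h1.
    assert (0 <= rsum N (fun i => Cmod2 (ip W (f i)))) by (apply rsum_ge0; intro; apply Cmod2_ge0).
    lra. }
  assert (B2 : 2 * fb * nsq W <= fb * fb * rsum K (fun j => Cmod2 (ip x (f (N+j)%nat)))
                  + rsum K (fun j => Cmod2 (ip W (f (N+j)%nat)))).
  { rewrite E, <- rsum_scal, <- rsum_scal, <- rsum_add. apply rsum_le. intro i.
    apply re_conj_bound, fb_pos. }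
  assert (hp := fb_pos). assert (hw := nsq_ge0 W).
  apply Rmult_le_reg_l with fb; auto. nra.
Qed.

Lemma Pa_cauchy x : Cauchy_seq (Pa x).
Proof.
  destruct (fb_upper x) as (s & hs & _).
  assert (hc := CV_Cauchy _ (exist _ s hs)).
  intros eps he. assert (hp := fb_pos).
  destruct (hc (eps*eps/fb)) as [N HN]. { apply Rdiv_lt_0_compat; nra. }
  exists (S N). intros n m hn hm.
  assert (key : forall n m, (n >= S N)%nat -> (m >= n)%nat -> nsq (vsub (Pa x m) (Pa x n)) < eps*eps).
  { clear n m hn hm. intros n m hn hm.
    replace m with (n + (m - n))%nat by lia. unfold Pa. rewrite vsum_shift.
    eapply Rle_lt_trans; [apply seg_bound|].
    set (g := fun i => Cmod2 (ip x (f i))).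
    assert (E : rsum (m - n) (fun j => g (n + j)%nat) = rsum (n + (m-n)) g - rsum n g)
      by (rewrite rsum_shift; ring).
    unfold g in E; rewrite E. clear E.
    destruct n as [|n']; [lia|]. replace (S n' + (m - S n'))%nat with (S (pred m)) by lia.
    rewrite !rsum_sf. specialize (HN (pred m) n'). unfold Rdist in HN.
    assert (HN' : Rabs (sum_f_R0 g (pred m) - sum_f_R0 g n') < eps*eps/fb) by (apply HN; lia).
    apply Rmult_lt_reg_r with (/ fb). apply Rinv_0_lt_compat; auto.
    rewrite (Rmult_comm fb), Rmult_assoc, Rinv_r by lra. rewrite Rmult_1_r.
    unfold g in HN'. unfold Rdiv in HN'. generalize (Rle_abs (sum_f_R0 (fun i => Cmod2 (ip x (f i))) (pred m) - sum_f_R0 (fun i => Cmod2 (ip x (f i))) n')). lra. }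
  apply vnorm_lt; auto.
  destruct (Nat.le_gt_cases n m).
  - rewrite nsq_sym. apply key; lia.
  - apply key; lia.
Qed.

Lemma Pa_limit_S x l : seq_conv (Pa x) l -> UstarU f x l.
Proof.
  intros hl z. unfold l2_ip, analysis_op. apply Cinf_iff.
  destruct (ip_cont _ _ z hl) as [h1 h2].
  assert (E : forall n, ip (Pa x n) z = Csum n (fun k => Cmul (ip x (f k)) (Cconj (ip z (f k))))).
  { intro n. unfold Pa. rewrite ip_vsum_l. apply Csum_ext'. intro i. rewrite ipZl, <- ip_sym; auto. }
  split; intros eps he; [destruct (h1 eps he) as [N HN] | destruct (h2 eps he) as [N HN]];
   exists N; intros n hn; rewrite <- E; apply HN; lia.
Qed.

Lemma S_exists x : exists l, seq_conv (Pa x) l /\ UstarU f x l.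
Proof.
  destruct (complete _ (Pa_cauchy x)) as [l hl]. exists l; split; auto. apply Pa_limit_S; auto.
Qed.


Lemma S_unique x y1 y2 : UstarU f x y1 -> UstarU f x y2 -> y1 = y2.
Proof. intros h1 h2. apply v_ext; intro z. eapply Cinf_unique; [apply h1|apply h2]. Qed.

Definition Sf (x : H) : H := proj1_sig (constructive_indefinite_description _ (S_exists x)).
Lemma Sf_spec x : seq_conv (Pa x) (Sf x) /\ UstarU f x (Sf x).
Proof. unfold Sf. destruct constructive_indefinite_description; simpl; auto. Qed.
Lemma Sf_U x : UstarU f x (Sf x).
Proof. apply Sf_spec. Qed.
Lemma Sf_eq x y : UstarU f x y -> Sf x = y.
Proof. intro h; eapply S_unique; [apply Sf_U | exact h]. Qed.

Lemma Sf_add x y : Sf (vadd x y) = vadd (Sf x) (Sf y).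
Proof.
  apply Sf_eq. intro z. unfold l2_ip, analysis_op in *. rewrite ipDl.
  eapply Cinf_ext; [| apply (Cinf_add _ _ _ _ (Sf_U x z) (Sf_U y z))].
  intro n; unfold analysis_op; rewrite ipDl; ring.
Qed.
Lemma Sf_scal a x : Sf (vscal a x) = vscal a (Sf x).
Proof.
  apply Sf_eq. intro z. unfold l2_ip, analysis_op in *. rewrite ipZl.
  eapply Cinf_ext; [| apply (Cinf_scal a _ _ (Sf_U x z))].
  intro n; unfold analysis_op; rewrite ipZl; ring.
Qed.
Lemma Sf_sub x y : Sf (vsub x y) = vsub (Sf x) (Sf y).
Proof.
  apply Sf_eq. intro z. unfold l2_ip, analysis_op in *. rewrite ipBl.
  eapply Cinf_ext; [| apply (Cinf_sub _ _ _ _ (Sf_U x z) (Sf_U y z))].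
  intro n; unfold analysis_op; rewrite ipBl; ring.
Qed.
Lemma Sf_zero : Sf vzero = vzero.
Proof.
  assert (E : (vzero : H) = vsub vzero vzero) by vext.
  rewrite E, Sf_sub. vext.
Qed.
Lemma Sf_vsum k (c : nat -> C) (u : nat -> H) :
  Sf (vsum k (fun i => vscal (c i) (u i))) = vsum k (fun i => vscal (c i) (Sf (u i))).
Proof. induction k; simpl. apply Sf_zero. rewrite Sf_add, Sf_scal, IHk; auto. Qed.

Lemma Sf_adj x z : ip (Sf x) z = ip x (Sf z).
Proof.
  assert (h1 := Sf_U x z). assert (h2 := Sf_U z x). unfold l2_ip, analysis_op in *.
  apply Cinf_conj in h2.
  assert (h3 : Cinfinite_sum (fun n => Cmul (ip x (f n)) (Cconj (ip z (f n)))) (Cconj (ip (Sf z) x))).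
  { eapply Cinf_ext; [| exact h2]. intro n; cbv beta; rewrite Cconj_mul, Cconj_conj; ring. }
  rewrite (Cinf_unique _ _ _ h1 h3). rewrite <- ip_sym. auto.
Qed.

Lemma Sf_quad x : infinite_sum (fun n => Cmod2 (ip x (f n))) (re (ip (Sf x) x)).
Proof. apply Cinf_mod2. apply (Sf_U x x). Qed.

Lemma Sf_pos : exists A, 0 < A /\ forall x, A * nsq x <= re (ip (Sf x) x).
Proof.
  destruct fb_spec as (A & hA & _ & h). exists A; split; auto. intro x.
  destruct (h x) as (s & hs & h1 & _). rewrite (inf_unique _ _ _ (Sf_quad x) hs). auto.
Qed.

Lemma Sf_im_span m u (hI : forall w, im_I_minus_UstarU f w -> in_span m u w) x :
  in_span m u (vsub x (Sf x)).
Proof. apply hI. exists x, (Sf x). split; auto. apply Sf_U. Qed.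

Lemma Sf_span m u (hI : forall w, im_I_minus_UstarU f w -> in_span m u w) x :
  in_span m u x -> in_span m u (Sf x).
Proof.
  intro hx. replace (Sf x) with (vsub x (vsub x (Sf x))) by vext.
  apply in_span_sub; auto. apply Sf_im_span; auto.
Qed.

Lemma Sf_fix_orth m u (hI : forall w, im_I_minus_UstarU f w -> in_span m u w) x :
  (forall j, (j < m)%nat -> ip x (u j) = C0) -> Sf x = x.
Proof.
  intro hx. apply v_ext; intro z. rewrite Sf_adj.
  assert (E : ip x (vsub z (Sf z)) = C0).
  { apply (orth_span IP ipDl ipZl ip_sym m u); auto. apply Sf_im_span; auto. }
  rewrite ipBr in E. apply Ceq; [assert (E' := f_equal re E) | assert (E' := f_equal im E)];
   simpl in E'; lra.
Qed.

Definition qS (x y : H) : C := ip (Sf x) y.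
Lemma qS_Dl x y z : qS (vadd x y) z = Cadd (qS x z) (qS y z).
Proof. unfold qS; rewrite Sf_add, ipDl; auto. Qed.
Lemma qS_Zl a x z : qS (vscal a x) z = Cmul a (qS x z).
Proof. unfold qS; rewrite Sf_scal, ipZl; auto. Qed.
Lemma qS_sym x y : qS y x = Cconj (qS x y).
Proof. unfold qS. rewrite Sf_adj, <- ip_sym. auto. Qed.
Lemma qS_pos v : v <> vzero -> 0 < re (qS v v).
Proof.
  intro vn. destruct Sf_pos as (A & hA & h). specialize (h v). unfold qS.
  assert (0 < nsq v). { destruct (nsq_ge0 v) as [h'|h']; auto. exfalso; apply vn, nsq_0; auto. }
  nra.
Qed.

Lemma a_to_b : finite_dim_set (im_I_minus_UstarU f) ->
  exists L : H -> Prop, finite_dim_subspace L /\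
     exists g : nat -> H, (forall n, L (g n)) /\ parseval_frame (fun n => vadd (f n) (g n)).
Proof.
  intros (k & e & he).
  destruct (GS1 k e) as (m & u & hu & hs).
  assert (hI : forall w, im_I_minus_UstarU f w -> in_span m u w).
  { intros w hw. apply (span_trans k e); auto. }
  destruct (GS2 qS qS_Dl qS_Zl qS_sym qS_pos m u hu) as (b & hb & hbs).
  exists (in_span m u). split.
  { split; [split; [apply in_span_zero | split; [apply in_span_add | apply in_span_scal]]|].
    exists m, u. tauto. }
  exists (fun n => vsum m (fun i => vscal (Csub (ip (f n) (b i)) (ip (f n) (u i))) (u i))).
  split. { intro n. eexists; reflexivity. }
  intro x.
  set (x' := vsub x (proj IP m u x)).
  set (W := vsum m (fun i => vscal (ip x (u i)) (b i))).
  set (y := vadd W x').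
  assert (C1' : forall n, ip x (vadd (f n) (vsum m (fun i => vscal (Csub (ip (f n) (b i)) (ip (f n) (u i))) (u i))))
                 = ip y (f n)).
  { intro n. rewrite ipDr, ip_vsum_scal_r.
    rewrite (Csum_ext' m _ (fun i => Csub (Cmul (ip x (u i)) (ip (b i) (f n))) (Cmul (ip x (u i)) (ip (u i) (f n))))).
    2:{ intro i. rewrite Cconj_sub, <- !ip_sym. ring. }
    rewrite Csum_sub. unfold y, W, x', proj. ipexp. ring. }
  assert (hx'o : forall j, (j < m)%nat -> ip x' (u j) = C0).
  { intros; unfold x'; apply (proj_orth IP ipDl ipZl ip_sym); auto. }
  assert (hWs : in_span m u W). { unfold W; apply in_span_vsum; auto. }
  assert (C2 : ip (Sf y) y = ip x x).
  { unfold y. rewrite Sf_add, (Sf_fix_orth m u hI x' hx'o).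
    rewrite ipDl, !ipDr.
    assert (e1 : ip (Sf W) x' = C0).
    { rewrite ip_sym. rewrite (orth_span IP ipDl ipZl ip_sym m u x'); auto. apply Cconj_0.
      apply Sf_span; auto. }
    assert (e2 : ip x' W = C0) by (apply (orth_span IP ipDl ipZl ip_sym m u x'); auto).
    rewrite e1, e2.
    assert (e3 : ip (Sf W) W = Csum m (fun i => Cmul (ip x (u i)) (Cconj (ip x (u i))))).
    { apply (normsum qS qS_Dl qS_Zl qS_sym); auto. }
    rewrite e3.
    assert (Ex : x = vadd (proj IP m u x) x') by (unfold x'; vext).
    assert (e4 : ip (proj IP m u x) x' = C0).
    { rewrite ip_sym. rewrite (orth_span IP ipDl ipZl ip_sym m u x'); auto. apply Cconj_0. apply proj_span. }
    assert (e5 : ip (proj IP m u x) (proj IP m u x) = Csum m (fun i => Cmul (ip x (u i)) (Cconj (ip x (u i))))).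
    { apply (normsum IP ipDl ipZl ip_sym); auto. }
    assert (e6 : ip x' (proj IP m u x) = C0).
    { apply (orth_span IP ipDl ipZl ip_sym m u x'); auto. apply proj_span. }
    rewrite <- e5. replace (IP x x) with (ip (vadd (proj IP m u x) x') (vadd (proj IP m u x) x'))
      by (rewrite <- Ex; auto). rewrite ipDl, !ipDr, e4, e6. ring. }
  assert (Q := Sf_quad y). rewrite C2 in Q. fold (nsq x) in Q. rewrite vnorm_sq.
  eapply inf_ext; [| exact Q]. intro n. cbv beta. rewrite C1'. auto.
Qed.

Lemma b_to_a : (exists L : H -> Prop, finite_dim_subspace L /\
     exists g : nat -> H, (forall n, L (g n)) /\ parseval_frame (fun n => vadd (f n) (g n))) ->
  finite_dim_set (im_I_minus_UstarU f).
Proof.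
  intros (L & (_ & k & e & hL) & g & hg & hp).
  destruct (GS1 k e) as (m & u & hu & hs).
  assert (hgs : forall n, in_span m u (g n)).
  { intro n. apply (span_trans k e); auto. apply hL; auto. }
  assert (horth : forall v n, (forall j, (j < m)%nat -> ip v (u j) = C0) -> ip v (vadd (f n) (g n)) = ip v (f n)).
  { intros v n hv. rewrite ipDr, (orth_span IP ipDl ipZl ip_sym m u v (g n)); auto. ring. }
  assert (key : forall x', (forall j, (j < m)%nat -> ip x' (u j) = C0) -> in_span m u (vsub x' (Sf x'))).
  { intros x' hx'. set (d := vsub x' (Sf x')). set (d' := vsub d (proj IP m u d)).
    assert (hd'o : forall j, (j < m)%nat -> ip d' (u j) = C0).
    { intros; unfold d'; apply (proj_orth IP ipDl ipZl ip_sym); auto. }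
    assert (E1 : ip x' d' = ip (Sf x') d').
    { eapply Cinf_unique; [apply (polar _ hp x' d') |].
      eapply Cinf_ext; [| apply (Sf_U x' d')]. intro n. cbv beta. unfold analysis_op.
      rewrite !horth; auto. }
    assert (E2 : ip (proj IP m u d) d' = C0).
    { rewrite ip_sym, (orth_span IP ipDl ipZl ip_sym m u d'); auto. apply Cconj_0. apply proj_span. }
    assert (E3 : ip d' d' = C0).
    { unfold d' at 1. rewrite ipBl, E2. unfold d. rewrite ipBl, E1. ring. }
    apply ip_def in E3. unfold d' in E3. apply vsub_eq0 in E3. fold d. rewrite E3. apply proj_span. }
  exists (m + m)%nat, (concat m u (fun i => vsub (u i) (Sf (u i)))).
  intros w (x & y & hxy & ->). apply Sf_eq in hxy. subst y.
  set (x' := vsub x (proj IP m u x)).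
  assert (E : vsub x (Sf x) = vadd (vsub x' (Sf x'))
               (vsum m (fun i => vscal (ip x (u i)) (vsub (u i) (Sf (u i)))))).
  { unfold x'. rewrite Sf_sub. unfold proj. rewrite Sf_vsum. apply v_ext; intro z. ipexp.
    rewrite (Csum_ext' m (fun i => Cmul (ip x (u i)) (ip (vsub (u i) (Sf (u i))) z))
       (fun i => Csub (Cmul (ip x (u i)) (ip (u i) z)) (Cmul (ip x (u i)) (ip (Sf (u i)) z))))
      by (intro; rewrite ipBl; ring).
    rewrite Csum_sub. ring. }
  rewrite E. apply in_span_concat.
  - apply key. intros; unfold x'; apply (proj_orth IP ipDl ipZl ip_sym); auto.
  - eexists; reflexivity.
Qed.

Lemma a_to_c : finite_dim_set (im_I_minus_UstarU f) ->
  exists M : H -> Prop, is_subspace M /\ is_closed_set M /\ finite_codim M /\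
     forall x, M x -> reconstructs f x.
Proof.
  intros (k & e & he).
  destruct (GS1 k e) as (m & u & hu & hs).
  assert (hI : forall w, im_I_minus_UstarU f w -> in_span m u w).
  { intros w hw. apply (span_trans k e); auto. }
  exists (fun x => forall j, (j < m)%nat -> ip x (u j) = C0). split; [|split; [|split]].
  - split; [|split].
    + intros; apply ip0l.
    + intros x y hx hy j hj. rewrite ipDl, hx, hy; auto. ring.
    + intros a x hx j hj. rewrite ipZl, hx; auto. ring.
  - intros s l hs' hl j hj. destruct (ip_cont s l (u j) hl) as [c1 c2].
    apply Ceq; simpl; [eapply UL_sequence; [exact c1|] | eapply UL_sequence; [exact c2|]];
    eapply cv_ext; try apply cv_const; intro n; simpl; rewrite hs'; auto.
  - exists m, u. intro x. exists (vsub x (proj IP m u x)), (proj IP m u x). split; [|split].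
    + intros; apply (proj_orth IP ipDl ipZl ip_sym); auto.
    + apply proj_span.
    + vext.
  - intros x hx. unfold reconstructs. assert (E := Sf_fix_orth m u hI x hx).
    destruct (Sf_spec x) as [hc _]. rewrite E in hc.
    intros eps he'. destruct (hc eps he') as [N HN]. exists N. intros n hn. apply (HN (S n)). lia.
Qed.

Lemma c_to_a : (exists M : H -> Prop, is_subspace M /\ is_closed_set M /\ finite_codim M /\
     forall x, M x -> reconstructs f x) -> finite_dim_set (im_I_minus_UstarU f).
Proof.
  intros (M & _ & _ & (k & e & hcod) & hrec).
  assert (hfix : forall x, M x -> Sf x = x).
  { intros x hx. apply Sf_eq. apply Pa_limit_S. intros eps he'. destruct (hrec x hx eps he') as [N HN].
    exists (S N). intros n hn. destruct n as [|n]; [lia|]. apply HN. lia. }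
  exists k, (fun i => vsub (e i) (Sf (e i))).
  intros w (x & y & hxy & ->). apply Sf_eq in hxy. subst y.
  destruct (hcod x) as (m0 & v & hm & [c ->] & ->).
  rewrite Sf_add, (hfix m0 hm), Sf_vsum. exists c. apply v_ext; intro z. ipexp.
    rewrite (Csum_ext' k (fun i => Cmul (c i) (ip (vsub (e i) (Sf (e i))) z))
       (fun i => Csub (Cmul (c i) (ip (e i) z)) (Cmul (c i) (ip (Sf (e i)) z))))
      by (intro; rewrite ipBl; ring).
    rewrite Csum_sub. ring.
Qed.
End Frame.
End Hilb.

Theorem theorem2p13 (H : HilbertSpace) (HH : is_hilbert H) (Hsep : separable H)
  (Hinf : infinite_dimensional H) (f : nat -> H) (Hf : frame f) :
  (finite_dim_set (im_I_minus_UstarU f) <->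
   exists L : H -> Prop, finite_dim_subspace L /\
     exists g : nat -> H, (forall n, L (g n)) /\
       parseval_frame (fun n => vadd (f n) (g n))) /\
  ((exists L : H -> Prop, finite_dim_subspace L /\
     exists g : nat -> H, (forall n, L (g n)) /\
       parseval_frame (fun n => vadd (f n) (g n))) <->
   exists M : H -> Prop, is_subspace M /\ is_closed_set M /\ finite_codim M /\
     forall x, M x -> reconstructs f x).
Proof.
  split; split; intro h.
  - exact (a_to_b H HH f Hf h).
  - exact (b_to_a H HH f Hf h).
  - exact (a_to_c H HH f Hf (b_to_a H HH f Hf h)).
  - exact (a_to_b H HH f Hf (c_to_a H HH f Hf h)).
Qed.
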